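(* Let $(\omega,c)\in\mathbb{R}^2$ satisfy: $\omega>c^2/4$, or $\omega=c^2/4$ and $c>0$. Then the function $(\alpha_0,\alpha_1)\ni\eta_3\mapsto T_\psi(\eta_3)\in(0,\infty)$ is strictly increasing, where $$T_\psi(\eta_3)=\frac{8}{\sqrt{\eta_3\sqrt{A(\eta_3)}}}\,K(k(\eta_3)).$$
   Context: $\alpha_0=\tfrac13(4c+\sqrt{48\omega+4c^2})$, $\alpha_1=4\sqrt\omega+2c$, $A(x)=-3x^2+8cx+64\omega$ (positive on $(\alpha_0,\alpha_1)$). For $\eta_3\in(\alpha_0,\alpha_1)$: $\eta_1=\frac{-\eta_3+4c-\sqrt{A(\eta_3)}}{2}$, $\eta_2=\frac{-\eta_3+4c+\sqrt{A(\eta_3)}}{2}$ (so $\eta_3(\eta_2-\eta_1)=\eta_3\sqrt{A(\eta_3)}$), and $k(\eta_3)^2=\frac{-\eta_1(\eta_3-\eta_2)}{\eta_3(\eta_2-\eta_1)}\in(0,1)$. $K(k)=\int_0^{\pi/2}(1-k^2\sin^2\theta)^{-1/2}d\theta$ is the complete elliptic integral of the first kind. $T_\psi$ is the fundamental period of the periodic solution $\psi=\Phi^2$ with maximum $\eta_3$. *)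

(* Defs.v *)
From Stdlib Require Import Reals.
From Coquelicot Require Import Coquelicot.
Open Scope R_scope.

Definition alpha0 (omega c : R) : R := (4 * c + sqrt (48 * omega + 4 * c ^ 2)) / 3.
Definition alpha1 (omega c : R) : R := 4 * sqrt omega + 2 * c.
Definition Apoly (omega c x : R) : R := - 3 * x ^ 2 + 8 * c * x + 64 * omega.

Definition eta1 (omega c e3 : R) : R := (- e3 + 4 * c - sqrt (Apoly omega c e3)) / 2.
Definition eta2 (omega c e3 : R) : R := (- e3 + 4 * c + sqrt (Apoly omega c e3)) / 2.

Definition ksq (omega c e3 : R) : R :=
  - eta1 omega c e3 * (e3 - eta2 omega c e3) / (e3 * (eta2 omega c e3 - eta1 omega c e3)).

(* k(eta3), the modulus (k^2 lies in (0,1) on the relevant interval) *)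
Definition kmod (omega c e3 : R) : R := sqrt (ksq omega c e3).

Definition ellipticK (k : R) : R :=
  RInt (fun theta => / sqrt (1 - k ^ 2 * (sin theta) ^ 2)) 0 (PI / 2).

Definition Tpsi (omega c e3 : R) : R :=
  8 / sqrt (e3 * sqrt (Apoly omega c e3)) * ellipticK (kmod omega c e3).

(* Main.v *)
Require Import Defs.
From Stdlib Require Import Reals Lra Psatz.
From Coquelicot Require Import Coquelicot.
Open Scope R_scope.
From Stdlib Require Import Lra Psatz.

Definition fJ (A B : R) (t : R) : R := / sqrt (A * cos t ^ 2 + B * sin t ^ 2).
Definition J (A B : R) : R := RInt (fJ A B) 0 (PI / 2).

Lemma sc1 t : sin t ^ 2 + cos t ^ 2 = 1.
Proof. pose proof (sin2_cos2 t). unfold Rsqr in H. lra. Qed.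

Lemma quad_pos A B t : 0 < A -> 0 < B -> 0 < A * cos t ^ 2 + B * sin t ^ 2.
Proof. intros. pose proof (sc1 t). pose proof (pow2_ge_0 (cos t)). pose proof (pow2_ge_0 (sin t)).
  destruct (Rle_dec A B).
  - assert (0 <= (B - A) * sin t ^ 2) by (apply Rmult_le_pos; lra). nra.
  - assert (0 <= (A - B) * cos t ^ 2) by (apply Rmult_le_pos; lra). nra. Qed.

Lemma fJ_cont A B t : 0 < A -> 0 < B -> continuous (fJ A B) t.
Proof.
  intros HA HB. apply (@ex_derive_continuous R_AbsRing R_NormedModule). unfold fJ.
  pose proof (quad_pos A B t HA HB).
  auto_derive. split. nra. split; [|exact I].
  apply Rgt_not_eq. apply sqrt_lt_R0. nra.
Qed.

Lemma fJ_ex A B a b : 0 < A -> 0 < B -> ex_RInt (fJ A B) a b.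
Proof. intros. apply (@ex_RInt_continuous R_CompleteNormedModule). intros. now apply fJ_cont. Qed.

Lemma cs_atan x : sin (2 * atan x) = 2 * x / (1 + x ^ 2) /\
                  cos (2 * atan x) = (1 - x ^ 2) / (1 + x ^ 2).
Proof.
  rewrite sin_2a, cos_2a, sin_atan, cos_atan.
  assert (H1 : 0 < 1 + x²) by (unfold Rsqr; nra).
  assert (H2 : sqrt (1 + x²) * sqrt (1 + x²) = 1 + x²) by (apply sqrt_sqrt; lra).
  assert (H3 : 0 < sqrt (1 + x²)) by (apply sqrt_lt_R0; lra).
  unfold Rsqr in *. set (r := sqrt (1 + x * x)) in *. replace (x ^ 2) with (x * x) by ring.
  rewrite <- H2. split; field; lra.
Qed.

Lemma piece_val u v t x p :
  0 < u -> 0 < v ->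
  cos p ^ 2 = (2 * x / (1 + x ^ 2)) ^ 2 ->
  sin p ^ 2 = ((1 - x ^ 2) / (1 + x ^ 2)) ^ 2 ->
  ((cos t <> 0 /\ x = v * sin t / (u * cos t)) \/
   (sin t <> 0 /\ x = u * cos t / (v * sin t))) ->
  fJ (((u ^ 2 + v ^ 2) / 2) ^ 2) ((u * v) ^ 2) p *
    (2 * (u * v) / (u ^ 2 * cos t ^ 2 + v ^ 2 * sin t ^ 2))
  = 2 * fJ (u ^ 4) (v ^ 4) t.
Proof.
  intros Hu Hv H1 H2 Hx. unfold fJ. rewrite H1, H2.
  pose proof (sc1 t) as Hsc.
  assert (HD : 0 < u ^ 2 * cos t ^ 2 + v ^ 2 * sin t ^ 2) by (apply quad_pos; apply pow_lt; lra).
  assert (HW : 0 < u ^ 4 * cos t ^ 2 + v ^ 4 * sin t ^ 2) by (apply quad_pos; apply pow_lt; lra).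
  set (C := cos t) in *. set (S := sin t) in *.
  set (D := u ^ 2 * C ^ 2 + v ^ 2 * S ^ 2) in *.
  set (W := u ^ 4 * C ^ 2 + v ^ 4 * S ^ 2) in *.
  assert (E : ((u ^ 2 + v ^ 2) / 2) ^ 2 * (2 * x / (1 + x ^ 2)) ^ 2 +
              (u * v) ^ 2 * ((1 - x ^ 2) / (1 + x ^ 2)) ^ 2 = (u * v / D) ^ 2 * W).
  { transitivity ((u * v / D) ^ 2 *
       (u ^ 4 * C ^ 2 * (S ^ 2 + C ^ 2) + v ^ 4 * S ^ 2 * (S ^ 2 + C ^ 2))).
    - destruct Hx as [[HC Hx]|[HS Hx]]; subst x; unfold D; field; repeat split; try lra.
      all: try (replace ((u * C) ^ 2 + (v * S) ^ 2) with D by (unfold D; ring); apply Rgt_not_eq; exact HD).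

    - rewrite Hsc. unfold W. ring. }
  rewrite E, sqrt_mult, sqrt_pow2.
  - assert (0 < sqrt W) by (apply sqrt_lt_R0; lra). field. repeat split; nra.
  - apply Rlt_le, Rdiv_lt_0_compat; nra.
  - apply pow2_ge_0.
  - lra.
Qed.

Definition phi1 (u v t : R) : R := 2 * atan (v / u * (sin t / cos t)) - PI / 2.
Definition phi2 (u v t : R) : R := PI / 2 - 2 * atan (u / v * (cos t / sin t)).
Definition dphi (u v t : R) : R := 2 * (u * v) / (u ^ 2 * cos t ^ 2 + v ^ 2 * sin t ^ 2).

Lemma D_pos u v t : 0 < u -> 0 < v -> 0 < u ^ 2 * cos t ^ 2 + v ^ 2 * sin t ^ 2.
Proof. intros. apply quad_pos; apply pow_lt; lra. Qed.

Lemma phi1_der u v t : 0 < u -> 0 < v -> cos t <> 0 -> is_derive (phi1 u v) t (dphi u v t).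
Proof.
  intros Hu Hv HC. unfold phi1, dphi. pose proof (D_pos u v t Hu Hv) as HD.
  pose proof (sc1 t) as Hsc.
  auto_derive; [exact HC|].
  transitivity (2 * (u * v) * (sin t ^ 2 + cos t ^ 2) / (u ^ 2 * cos t ^ 2 + v ^ 2 * sin t ^ 2)).
  - field. repeat split; try lra; try exact HC. all: try (intro HH; nra).
  - rewrite Hsc. field. lra.
Qed.

Lemma phi2_der u v t : 0 < u -> 0 < v -> sin t <> 0 -> is_derive (phi2 u v) t (dphi u v t).
Proof.
  intros Hu Hv HS. unfold phi2, dphi. pose proof (D_pos u v t Hu Hv) as HD.
  pose proof (sc1 t) as Hsc.
  auto_derive; [exact HS|].
  transitivity (2 * (u * v) * (sin t ^ 2 + cos t ^ 2) / (u ^ 2 * cos t ^ 2 + v ^ 2 * sin t ^ 2)).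
  - field. repeat split; try lra; try exact HS. all: try (intro HH; nra).
  - rewrite Hsc. field. lra.
Qed.

Lemma dphi_cont u v t : 0 < u -> 0 < v -> continuous (dphi u v) t.
Proof.
  intros Hu Hv. apply (@ex_derive_continuous R_AbsRing R_NormedModule). unfold dphi.
  pose proof (D_pos u v t Hu Hv). auto_derive. lra.
Qed.

Definition F2 (u v : R) := fJ (((u ^ 2 + v ^ 2) / 2) ^ 2) ((u * v) ^ 2).

Lemma F2_cont u v t : 0 < u -> 0 < v -> continuous (F2 u v) t.
Proof. intros. unfold F2. apply fJ_cont; apply pow_lt; nra. Qed.

Lemma tan_PI4' : sin (PI / 4) / cos (PI / 4) = 1.
Proof. rewrite sin_PI4, cos_PI4. assert (0 < sqrt 2) by (apply sqrt_lt_R0; lra). field. lra. Qed.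

Lemma piece1 u v : 0 < u -> 0 < v ->
  RInt (fun t => 2 * fJ (u ^ 4) (v ^ 4) t) 0 (PI / 4) =
  RInt (F2 u v) (- (PI / 2)) (2 * atan (v / u) - PI / 2).
Proof.
  intros Hu Hv. pose proof PI4_RGT_0. pose proof PI4_RLT_PI2.
  transitivity (RInt (fun y => scal (dphi u v y) (F2 u v (phi1 u v y))) 0 (PI / 4)).
  - apply RInt_ext. rewrite Rmin_left, Rmax_right by lra. intros t Ht.
    assert (HC : 0 < cos t) by (apply cos_gt_0; lra).
    change (scal (dphi u v t) (F2 u v (phi1 u v t))) with (dphi u v t * F2 u v (phi1 u v t)).
    rewrite (Rmult_comm (dphi u v t)). symmetry. unfold F2, dphi.
    destruct (cs_atan (v / u * (sin t / cos t))) as [Hs Hc].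
    apply piece_val with (x := v / u * (sin t / cos t)); try lra.
    + unfold phi1. rewrite cos_minus, cos_PI2, sin_PI2, Hs. ring.
    + unfold phi1. rewrite sin_minus, cos_PI2, sin_PI2, Hc. ring.
    + left. split; [lra|]. field. lra.
  - etransitivity.
    { apply (@RInt_comp R_CompleteNormedModule (F2 u v) (phi1 u v) (dphi u v) 0 (PI / 4)).
      + intros. apply F2_cont; lra.
      + rewrite Rmin_left, Rmax_right by lra. intros t Ht.
        assert (HC : 0 < cos t) by (apply cos_gt_0; lra).
        split. apply phi1_der; lra. apply dphi_cont; lra. }
    unfold phi1. rewrite tan_PI4', sin_0, cos_0. f_equal.
    + replace (v / u * (0 / 1)) with 0 by (field; lra). rewrite atan_0. lra.
    + f_equal. f_equal. f_equal. ring.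
Qed.

Lemma piece2 u v : 0 < u -> 0 < v ->
  RInt (fun t => 2 * fJ (u ^ 4) (v ^ 4) t) (PI / 4) (PI / 2) =
  RInt (F2 u v) (2 * atan (v / u) - PI / 2) (PI / 2).
Proof.
  intros Hu Hv. pose proof PI4_RGT_0. pose proof PI4_RLT_PI2. pose proof PI_RGT_0.
  transitivity (RInt (fun y => scal (dphi u v y) (F2 u v (phi2 u v y))) (PI / 4) (PI / 2)).
  - apply RInt_ext. rewrite Rmin_left, Rmax_right by lra. intros t Ht.
    assert (HS : 0 < sin t) by (apply sin_gt_0; lra).
    change (scal (dphi u v t) (F2 u v (phi2 u v t))) with (dphi u v t * F2 u v (phi2 u v t)).
    rewrite (Rmult_comm (dphi u v t)). symmetry. unfold F2, dphi.
    destruct (cs_atan (u / v * (cos t / sin t))) as [Hs Hc].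
    apply piece_val with (x := u / v * (cos t / sin t)); try lra.
    + unfold phi2. rewrite cos_minus, cos_PI2, sin_PI2, Hs. ring.
    + unfold phi2. rewrite sin_minus, cos_PI2, sin_PI2, Hc. ring.
    + right. split; [lra|]. field. lra.
  - etransitivity.
    { apply (@RInt_comp R_CompleteNormedModule (F2 u v) (phi2 u v) (dphi u v) (PI / 4) (PI / 2)).
      + intros. apply F2_cont; lra.
      + rewrite Rmin_left, Rmax_right by lra. intros t Ht.
        assert (HS : 0 < sin t) by (apply sin_gt_0; lra).
        split. apply phi2_der; lra. apply dphi_cont; lra. }
    unfold phi2. rewrite sin_PI4, cos_PI4, sin_PI2, cos_PI2. f_equal.
    + replace (u / v * (1 / sqrt 2 / (1 / sqrt 2))) with (/ (v / u)).
      rewrite atan_inv. lra. apply Rdiv_lt_0_compat; lra.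
      assert (0 < sqrt 2) by (apply sqrt_lt_R0; lra). field. lra.
    + replace (u / v * (0 / 1)) with 0 by (field; lra). rewrite atan_0. lra.
Qed.

Lemma RInt_scal_R f a b l : ex_RInt f a b -> RInt (fun x => l * f x) a b = l * RInt f a b.
Proof. intros H. exact (RInt_scal f a b l H). Qed.

Lemma ex_RInt_scal_R f a b l : ex_RInt f a b -> ex_RInt (fun x => l * f x) a b.
Proof. intros H. exact (ex_RInt_scal f a b l H). Qed.

Lemma Chasles_R f a b c : ex_RInt f a b -> ex_RInt f b c -> RInt f a b + RInt f b c = RInt f a c.
Proof. intros H1 H2. exact (RInt_Chasles f a b c H1 H2). Qed.

Lemma fJ_even A B t : fJ A B (- t) = fJ A B t.
Proof. unfold fJ. rewrite cos_neg, sin_neg. f_equal. f_equal. ring. Qed.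

Lemma half_even A B : 0 < A -> 0 < B -> RInt (fJ A B) (- (PI / 2)) 0 = J A B.
Proof.
  intros HA HB. unfold J.
  assert (E : RInt (fun y => scal (-1) (fJ A B (-1 * y + 0))) 0 (PI / 2) =
              RInt (fJ A B) (-1 * 0 + 0) (-1 * (PI / 2) + 0)).
  { apply (RInt_comp_lin (fJ A B) (-1) 0 0 (PI / 2)). apply fJ_ex; lra. }
  replace (-1 * 0 + 0) with 0 in E by ring.
  replace (-1 * (PI / 2) + 0) with (- (PI / 2)) in E by ring.
  rewrite <- (opp_RInt_swap (fJ A B)) in E by (apply fJ_ex; lra).
  assert (E2 : RInt (fun y => scal (-1) (fJ A B (-1 * y + 0))) 0 (PI / 2) =
               -1 * RInt (fJ A B) 0 (PI / 2)).
  { rewrite <- RInt_scal_R by (apply fJ_ex; lra). apply RInt_ext. intros x _.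
    replace (-1 * x + 0) with (- x) by ring. rewrite fJ_even. reflexivity. }
  rewrite E2 in E. change (opp (RInt (fJ A B) (- (PI / 2)) 0)) with (- RInt (fJ A B) (- (PI / 2)) 0) in E.
  lra.
Qed.

Lemma gauss u v : 0 < u -> 0 < v ->
  J (u ^ 4) (v ^ 4) = J (((u ^ 2 + v ^ 2) / 2) ^ 2) ((u * v) ^ 2).
Proof.
  intros Hu Hv.
  assert (HA : 0 < u ^ 4) by (apply pow_lt; lra).
  assert (HB : 0 < v ^ 4) by (apply pow_lt; lra).
  assert (HM : 0 < ((u ^ 2 + v ^ 2) / 2) ^ 2) by (apply pow_lt; nra).
  assert (HG : 0 < (u * v) ^ 2) by (apply pow_lt; nra).
  assert (E : 2 * J (u ^ 4) (v ^ 4) = 2 * J (((u ^ 2 + v ^ 2) / 2) ^ 2) ((u * v) ^ 2)).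
  { unfold J at 1. rewrite <- RInt_scal_R by (apply fJ_ex; lra).
    rewrite <- (Chasles_R _ 0 (PI / 4) (PI / 2)) by (apply ex_RInt_scal_R, fJ_ex; lra).
    rewrite piece1, piece2 by lra.
    rewrite Chasles_R by (unfold F2; apply fJ_ex; lra).
    rewrite <- (Chasles_R _ (- (PI / 2)) 0 (PI / 2)) by (unfold F2; apply fJ_ex; lra).
    unfold F2. rewrite half_even by lra. unfold J. ring. }
  lra.
Qed.

Lemma dom w c e :
  (w > c ^ 2 / 4 \/ (w = c ^ 2 / 4 /\ c > 0)) ->
  alpha0 w c < e -> e < alpha1 w c ->
  0 < e /\ 0 < Apoly w c e /\ 0 < eta2 w c e /\ eta2 w c e < e /\ eta1 w c e < 0.
Proof.
  intros Hwc H0 H1. unfold alpha0, alpha1 in *.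
  assert (Hw : 0 < w) by (destruct Hwc as [H|[H H']]; nra).
  set (U := sqrt (48 * w + 4 * c ^ 2)) in *.
  set (V := sqrt w) in *.
  assert (HU0 : 0 <= U) by apply sqrt_pos.
  assert (HV0 : 0 < V) by (apply sqrt_lt_R0; lra).
  assert (HU2 : U * U = 48 * w + 4 * c ^ 2) by (apply sqrt_sqrt; nra).
  assert (HV2 : V * V = w) by (apply sqrt_sqrt; lra).
  clearbody U V.
  assert (HU4 : - 4 * c <= U) by nra.
  assert (He : 0 < e) by lra.
  assert (H6 : 6 * V + c <= U).
  { destruct (Rle_dec 0 (6 * V + c)). 
    - assert (0 <= 3 * (2 * V - c) ^ 2) by nra. nra.
    - lra. }
  assert (HA : 0 < Apoly w c e).
  { unfold Apoly. assert (0 < (e - (4 * c - 2 * U) / 3) * ((4 * c + 2 * U) / 3 - e)) by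
      (apply Rmult_lt_0_compat; lra). nra. }
  unfold eta1, eta2. set (S := sqrt (Apoly w c e)) in *.
  assert (HS0 : 0 < S) by (apply sqrt_lt_R0; lra).
  assert (HS2 : S * S = Apoly w c e) by (apply sqrt_sqrt; lra).
  clearbody S. unfold Apoly in *.
  assert (HL : 2 * c - 4 * V < e).
  { destruct (Rle_dec (2 * c - 12 * V) 0). lra.
    assert (0 <= 48 * V * (c - 2 * V)) by (apply Rmult_le_pos; nra). nra. }
  assert (Hsq : (e - 4 * c) ^ 2 < S * S).
  { rewrite HS2. assert (0 < (e - (2 * c - 4 * V)) * (2 * c + 4 * V - e)) by
      (apply Rmult_lt_0_compat; lra). nra. }
  assert (Hs1 : e - 4 * c < S) by nra.
  assert (Hs2 : 4 * c - e < S) by nra.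
  assert (H3 : U < 3 * e - 4 * c) by lra.
  assert (Hs3 : S * S < (3 * e - 4 * c) ^ 2) by nra.
  assert (Hs4 : S < 3 * e - 4 * c) by nra.
  repeat split; lra.
Qed.

Lemma T_eq w c e :
  0 < e -> 0 < Apoly w c e -> 0 < eta2 w c e -> eta2 w c e < e -> eta1 w c e < 0 ->
  Tpsi w c e = 8 * J (e * sqrt (Apoly w c e)) (eta2 w c e * (e - eta1 w c e)).
Proof.
  intros He HA Hp Hpe Hq.
  assert (Hpq : eta2 w c e - eta1 w c e = sqrt (Apoly w c e)) by (unfold eta1, eta2; field).
  unfold Tpsi, ellipticK, kmod.
  assert (Hk : ksq w c e = - eta1 w c e * (e - eta2 w c e) / (e * sqrt (Apoly w c e))).
  { unfold ksq. rewrite Hpq. reflexivity. }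
  set (S := sqrt (Apoly w c e)) in *.
  assert (HS : 0 < S) by (apply sqrt_lt_R0; lra).
  set (p := eta2 w c e) in *. set (q := eta1 w c e) in *.
  assert (Hk0 : 0 <= ksq w c e).
  { rewrite Hk. apply Rlt_le, Rdiv_lt_0_compat; nra. }
  rewrite pow2_sqrt by exact Hk0.
  set (al := e * S). set (be := p * (e - q)).
  assert (Hal : 0 < al) by (unfold al; nra).
  assert (Hbe : 0 < be) by (unfold be; nra).
  assert (Hsal : 0 < sqrt al) by (apply sqrt_lt_R0; lra).
  rewrite (RInt_ext _ (fun t => sqrt al * fJ al be t)).
  - rewrite RInt_scal_R by (apply fJ_ex; lra). unfold J. field. lra.
  - intros t _. unfold fJ.
    pose proof (sc1 t) as Hsc.
    assert (E : al * cos t ^ 2 + be * sin t ^ 2 = al * (1 - ksq w c e * sin t ^ 2)).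
    { rewrite Hk. unfold al, be. replace (cos t ^ 2) with (1 - sin t ^ 2) by lra.
      rewrite <- Hpq. field. split; lra. }
    pose proof (quad_pos al be t Hal Hbe) as HQ.
    assert (HX : 0 < 1 - ksq w c e * sin t ^ 2).
    { rewrite E in HQ. nra. }
    rewrite E, sqrt_mult by lra.
    assert (0 < sqrt (1 - ksq w c e * sin t ^ 2)) by (apply sqrt_lt_R0; lra).
    set (X := sqrt (1 - ksq w c e * sin t ^ 2)) in *.
    assert (EQ : / X = sqrt al * / (sqrt al * X)) by (field; split; lra).
    exact EQ.
Qed.

Definition f1 w c e := e * sqrt (Apoly w c e) + eta2 w c e * (e - eta1 w c e).
Definition f2 w c e := (e * sqrt (Apoly w c e)) * (eta2 w c e * (e - eta1 w c e)).

Lemma f1_der w c e : 0 < Apoly w c e ->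
  is_derive (fun x => - f1 w c x) e
   (3 * (e - eta2 w c e) * (e + eta2 w c e - eta1 w c e) / sqrt (Apoly w c e)).
Proof.
  intros HA. unfold f1, eta1, eta2. unfold Apoly in *.
  auto_derive; [lra|].
  replace (-3 * (e * (e * 1)) + 8 * c * e + 64 * w) with (-3 * e ^ 2 + 8 * c * e + 64 * w) by ring.
  assert (HS0 : 0 < sqrt (-3 * e ^ 2 + 8 * c * e + 64 * w)) by (apply sqrt_lt_R0; lra).
  assert (HS2 : sqrt (-3 * e ^ 2 + 8 * c * e + 64 * w) * sqrt (-3 * e ^ 2 + 8 * c * e + 64 * w)
                = -3 * e ^ 2 + 8 * c * e + 64 * w) by (apply sqrt_sqrt; lra).
  set (S := sqrt (-3 * e ^ 2 + 8 * c * e + 64 * w)) in *. clearbody S.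
  assert (Hw : w = (S * S + 3 * e ^ 2 - 8 * c * e) / 64) by lra.
  subst w. field. lra.
Qed.

Definition Qp (p r t : R) := r * t ^ 2 + 2 * r ^ 2 * t + r ^ 3 + 3 * p * t ^ 2 + 9 * p * r * t
  + 4 * p * r ^ 2 + 9 * p ^ 2 * t + 9 * p ^ 2 * r + 6 * p ^ 3.

Lemma f2_der w c e : 0 < Apoly w c e ->
  is_derive (fun x => - f2 w c x) e
   ((e - eta2 w c e) * Qp (eta2 w c e) (- eta1 w c e) (e - eta2 w c e) / sqrt (Apoly w c e)).
Proof.
  intros HA. unfold f2, eta1, eta2, Qp. unfold Apoly in *.
  auto_derive; [lra|].
  replace (-3 * (e * (e * 1)) + 8 * c * e + 64 * w) with (-3 * e ^ 2 + 8 * c * e + 64 * w) by ring.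
  assert (HS0 : 0 < sqrt (-3 * e ^ 2 + 8 * c * e + 64 * w)) by (apply sqrt_lt_R0; lra).
  assert (HS2 : sqrt (-3 * e ^ 2 + 8 * c * e + 64 * w) * sqrt (-3 * e ^ 2 + 8 * c * e + 64 * w)
                = -3 * e ^ 2 + 8 * c * e + 64 * w) by (apply sqrt_sqrt; lra).
  set (S := sqrt (-3 * e ^ 2 + 8 * c * e + 64 * w)) in *. clearbody S.
  assert (Hw : w = (S * S + 3 * e ^ 2 - 8 * c * e) / 64) by lra.
  subst w. field. lra.
Qed.

Lemma Qp_pos p r t : 0 < p -> 0 < r -> 0 < t -> 0 < Qp p r t.
Proof.
  intros. unfold Qp.
  assert (0 < r * t ^ 2) by (apply Rmult_lt_0_compat; [lra|apply pow_lt; lra]).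
  assert (0 < r ^ 3) by (apply pow_lt; lra).
  assert (0 < p ^ 3) by (apply pow_lt; lra).
  assert (0 < r ^ 2 * t) by (apply Rmult_lt_0_compat; [apply pow_lt; lra|lra]).
  assert (0 < p * t ^ 2) by (apply Rmult_lt_0_compat; [lra|apply pow_lt; lra]).
  assert (0 < p * r * t) by (repeat apply Rmult_lt_0_compat; lra).
  assert (0 < p * r ^ 2) by (apply Rmult_lt_0_compat; [lra|apply pow_lt; lra]).
  assert (0 < p ^ 2 * t) by (apply Rmult_lt_0_compat; [apply pow_lt; lra|lra]).
  assert (0 < p ^ 2 * r) by (apply Rmult_lt_0_compat; [apply pow_lt; lra|lra]).
  lra.
Qed.

Lemma mono w c x y :
  (w > c ^ 2 / 4 \/ (w = c ^ 2 / 4 /\ c > 0)) ->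
  alpha0 w c < x -> x < y -> y < alpha1 w c ->
  f1 w c y < f1 w c x /\ f2 w c y < f2 w c x.
Proof.
  intros Hwc Hx Hxy Hy.
  split.
  - assert (- f1 w c x < - f1 w c y); [|lra].
    apply (incr_function (fun z => - f1 w c z) (Finite (alpha0 w c)) (Finite (alpha1 w c))
      (fun z => 3 * (z - eta2 w c z) * (z + eta2 w c z - eta1 w c z) / sqrt (Apoly w c z)));
      simpl; try lra.
    + intros z H1 H2. destruct (dom w c z Hwc H1 H2) as (?&?&?&?&?). apply f1_der; lra.
    + intros z H1 H2. destruct (dom w c z Hwc H1 H2) as (?&?&?&?&?).
      assert (0 < sqrt (Apoly w c z)) by (apply sqrt_lt_R0; lra).
      apply Rlt_gt, Rdiv_lt_0_compat; [|lra]. apply Rmult_lt_0_compat; [|lra]. lra.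
  - assert (- f2 w c x < - f2 w c y); [|lra].
    apply (incr_function (fun z => - f2 w c z) (Finite (alpha0 w c)) (Finite (alpha1 w c))
      (fun z => (z - eta2 w c z) * Qp (eta2 w c z) (- eta1 w c z) (z - eta2 w c z) / sqrt (Apoly w c z)));
      simpl; try lra.
    + intros z H1 H2. destruct (dom w c z Hwc H1 H2) as (?&?&?&?&?). apply f2_der; lra.
    + intros z H1 H2. destruct (dom w c z Hwc H1 H2) as (?&?&?&?&?).
      assert (0 < sqrt (Apoly w c z)) by (apply sqrt_lt_R0; lra).
      apply Rlt_gt, Rdiv_lt_0_compat; [|lra]. apply Rmult_lt_0_compat; [lra|].
      apply Qp_pos; lra.
Qed.

Lemma gauss' a b : 0 < a -> 0 < b ->
  J a b = J (((sqrt a + sqrt b) / 2) ^ 2) (sqrt a * sqrt b).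
Proof.
  intros Ha Hb.
  assert (Hsa : 0 < sqrt a) by (apply sqrt_lt_R0; lra).
  assert (Hsb : 0 < sqrt b) by (apply sqrt_lt_R0; lra).
  assert (Hu : 0 < sqrt (sqrt a)) by (apply sqrt_lt_R0; lra).
  assert (Hv : 0 < sqrt (sqrt b)) by (apply sqrt_lt_R0; lra).
  pose proof (gauss _ _ Hu Hv) as G.
  assert (E2 : forall z, 0 <= z -> sqrt (sqrt z) ^ 2 = sqrt z).
  { intros z Hz. apply pow2_sqrt. apply sqrt_pos. }
  assert (E4 : forall z, 0 <= z -> sqrt (sqrt z) ^ 4 = z).
  { intros z Hz. replace 4%nat with (2 * 2)%nat by reflexivity. rewrite pow_mult, E2 by lra.
    apply pow2_sqrt; lra. }
  rewrite E4, E4 in G by lra.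
  rewrite G. rewrite E2, E2 by lra. f_equal.
  rewrite Rpow_mult_distr, E2, E2 by lra. reflexivity.
Qed.

Lemma J_strict A B A' B' : 0 < A' -> A' < A -> 0 < B' -> B' < B -> J A B < J A' B'.
Proof.
  intros. unfold J. pose proof PI_RGT_0.
  apply RInt_lt; try lra.
  - intros. apply fJ_cont; lra.
  - intros. apply fJ_cont; lra.
  - intros t _. unfold fJ.
    pose proof (quad_pos A' B' t H H1).
    pose proof (quad_pos (A - A') (B - B') t ltac:(lra) ltac:(lra)).
    apply Rinv_lt_contravar.
    + apply Rmult_lt_0_compat; apply sqrt_lt_R0; lra.
    + apply sqrt_lt_1; lra.
Qed.

Theorem proposition3p7 (omega c : R) :
  (omega > c ^ 2 / 4 \/ (omega = c ^ 2 / 4 /\ c > 0)) ->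
  forall x y : R,
    alpha0 omega c < x -> x < y -> y < alpha1 omega c ->
    Tpsi omega c x < Tpsi omega c y.
Proof.
  intros Hwc x y Hx Hxy Hy.
  destruct (dom omega c x Hwc Hx ltac:(lra)) as (ex & Ax & px & pex & qx).
  destruct (dom omega c y Hwc ltac:(lra) Hy) as (ey & Ay & py & pey & qy).
  destruct (mono omega c x y Hwc Hx Hxy Hy) as [M1 M2].
  unfold f1, f2 in M1, M2.
  rewrite (T_eq omega c x), (T_eq omega c y) by lra.
  assert (Sx : 0 < sqrt (Apoly omega c x)) by (apply sqrt_lt_R0; lra).
  assert (Sy : 0 < sqrt (Apoly omega c y)) by (apply sqrt_lt_R0; lra).
  set (ax := x * sqrt (Apoly omega c x)) in *.
  set (ay := y * sqrt (Apoly omega c y)) in *.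
  set (bx := eta2 omega c x * (x - eta1 omega c x)) in *.
  set (byy := eta2 omega c y * (y - eta1 omega c y)) in *.
  assert (Hax : 0 < ax) by (unfold ax; nra).
  assert (Hay : 0 < ay) by (unfold ay; nra).
  assert (Hbx : 0 < bx) by (unfold bx; nra).
  assert (Hby : 0 < byy) by (unfold byy; nra).
  rewrite (gauss' ax bx), (gauss' ay byy) by lra.
  assert (Gx : sqrt ax * sqrt bx = sqrt (ax * bx)) by (rewrite sqrt_mult; lra).
  assert (Gy : sqrt ay * sqrt byy = sqrt (ay * byy)) by (rewrite sqrt_mult; lra).
  assert (HG : sqrt ay * sqrt byy < sqrt ax * sqrt bx).
  { rewrite Gx, Gy. apply sqrt_lt_1; nra. }
  assert (HGy : 0 < sqrt ay * sqrt byy).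
  { apply Rmult_lt_0_compat; apply sqrt_lt_R0; lra. }
  assert (Ex : ((sqrt ax + sqrt bx) / 2) ^ 2 = (ax + bx + 2 * (sqrt ax * sqrt bx)) / 4).
  { assert (sqrt ax * sqrt ax = ax) by (apply sqrt_sqrt; lra).
    assert (sqrt bx * sqrt bx = bx) by (apply sqrt_sqrt; lra). nra. }
  assert (Ey : ((sqrt ay + sqrt byy) / 2) ^ 2 = (ay + byy + 2 * (sqrt ay * sqrt byy)) / 4).
  { assert (sqrt ay * sqrt ay = ay) by (apply sqrt_sqrt; lra).
    assert (sqrt byy * sqrt byy = byy) by (apply sqrt_sqrt; lra). nra. }
  apply Rmult_lt_compat_l; [lra|].
  apply J_strict; lra.
Qed.
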